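(* Let $\mathcal{A}$ be a Desargues affine plane, let $O\neq I$ be points, and let $\delta$ be a dilatation of $\mathcal{A}$ having a fixed point (which may lie on the line $\ell^{OI}$ or off it). Equip $\ell^{OI}$ with the skew field structure with zero $O$ and unit $I$, and the line $\delta(\ell^{OI})$ with the skew field structure with zero $\delta(O)$ and unit $\delta(I)$. Then for all $A,B\in\ell^{OI}$ with $B\neq O$, \[ \delta(r(A:B))=r(\delta(A):\delta(B)), \] where the ratio on the left is computed in $\ell^{OI}$ and the ratio on the right in $\delta(\ell^{OI})$.
   Context: A Desargues affine plane is an incidence structure of points and lines in which any two distinct points lie on exactly one line, through a point not on a line $\ell$ there is exactly one line disjoint from $\ell$ (Playfair), there exist three non-collinear points, and Desargues' axiom holds: if $A,B,C,A',B',C'$ are points such that the pairwise distinct lines $AA',BB',CC'$ are either all parallel or all pass through one point, and $AB\parallel A'B'$, $BC\parallel B'C'$ (with $AB\neq A'B'$, $BC\neq B'C'$, $A\ne C$, $A'\ne C'$), then $AC\parallel A'C'$. Skew field on a line: for distinct points $O,I$ and points $A,B$ on the line $\ell^{OI}$, addition is defined by: choose a point $B_1\notin\ell^{OI}$; let $P_1$ be the intersection of the line through $B_1$ parallel to $\ell^{OI}$ with the line through $A$ parallel to $OB_1$; then $A+B$ is the intersection of $\ell^{OI}$ with the line through $P_1$ parallel to $BB_1$. Multiplication is defined by: choose $B_1\notin\ell^{OI}$; let $P_1$ be the intersection of the line through $A$ parallel to $IB_1$ with the line $OB_1$; then $A\cdot B$ is the intersection of $\ell^{OI}$ with the line through $P_1$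 parallel to $BB_1$. These operations do not depend on the choice of $B_1$ and make $(\ell^{OI},+,\cdot)$ a skew field with zero $O$ and unit $I$; the same construction applies to any line with any chosen pair of distinct points as zero and unit. $X^{-1}$ denotes the multiplicative inverse. Ratio of two points on a line with chosen zero $O$: $r(A:B)=B^{-1}A$ for $B\neq O$. A dilatation of $\mathcal{A}$ is a collineation $\delta$ such that $\delta(P)\delta(Q)\parallel PQ$ for all points $P\neq Q$. *)

(* Defs.v *)
From Stdlib Require Import ClassicalEpsilon.

Set Implicit Arguments.

Section Plane.
Variables (Point Line : Type) (inc : Point -> Line -> Prop).

Definition par (l m : Line) : Prop :=
  l = m \/ ~ (exists P, inc P l /\ inc P m).

Definition collinear (A B C : Point) : Prop :=
  exists l, inc A l /\ inc B l /\ inc C l.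

Definition desargues_axiom : Prop :=
  forall (A B C A' B' C' : Point)
         (lAA lBB lCC lAB lA'B' lBC lB'C' lAC lA'C' : Line),
    A <> A' -> B <> B' -> C <> C' ->
    inc A lAA -> inc A' lAA -> inc B lBB -> inc B' lBB ->
    inc C lCC -> inc C' lCC ->
    lAA <> lBB -> lBB <> lCC -> lAA <> lCC ->
    ((par lAA lBB /\ par lBB lCC /\ par lAA lCC) \/
     (exists P, inc P lAA /\ inc P lBB /\ inc P lCC)) ->
    A <> B -> A' <> B' -> B <> C -> B' <> C' -> A <> C -> A' <> C' ->
    inc A lAB -> inc B lAB -> inc A' lA'B' -> inc B' lA'B' ->
    inc B lBC -> inc C lBC -> inc B' lB'C' -> inc C' lB'C' ->
    inc A lAC -> inc C lAC -> inc A' lA'C' -> inc C' lA'C' ->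
    lAB <> lA'B' -> lBC <> lB'C' ->
    par lAB lA'B' -> par lBC lB'C' -> par lAC lA'C'.

Definition desargues_affine_plane : Prop :=
  (forall P Q, P <> Q ->
     exists l, inc P l /\ inc Q l /\ (forall m, inc P m -> inc Q m -> m = l)) /\
  (forall P l, ~ inc P l ->
     exists m, inc P m /\ par m l /\ (forall m', inc P m' -> par m' l -> m' = m)) /\
  (exists A B C : Point, ~ collinear A B C) /\
  desargues_axiom.

Definition on_line (O I X : Point) : Prop :=
  exists l, inc O l /\ inc I l /\ inc X l.

Definition par_to (m : Line) (X Y : Point) : Prop :=
  exists n, inc X n /\ inc Y n /\ par m n.

Definition mul_rel (O I A B C : Point) : Prop :=
  on_line O I C /\
  exists B1 P1 : Point, ~ on_line O I B1 /\
    (exists m, inc A m /\ par_to m I B1 /\ inc P1 m) /\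
    (exists n, inc O n /\ inc B1 n /\ inc P1 n) /\
    (exists k, inc P1 k /\ par_to k B B1 /\ inc C k).

Definition mul (O I A B : Point) : Point :=
  epsilon (inhabits O) (fun C => mul_rel O I A B C).

Definition inv (O I X : Point) : Point :=
  epsilon (inhabits O) (fun Y => on_line O I Y /\ mul O I Y X = I).

Definition ratio (O I A B : Point) : Point := mul O I (inv O I B) A.

Definition collineation (f : Point -> Point) : Prop :=
  (forall P Q, f P = f Q -> P = Q) /\ (forall Q, exists P, f P = Q) /\
  (forall l, exists m, forall P, inc P m <-> exists Q, inc Q l /\ f Q = P).

Definition dilatation (f : Point -> Point) : Prop :=
  collineation f /\
  forall P Q, P <> Q -> forall l m,
    inc P l -> inc Q l -> inc (f P) m -> inc (f Q) m -> par l m.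

End Plane.

(* Main.v *)
Require Import Defs.
From Stdlib Require Import Classical ClassicalEpsilon.
Set Implicit Arguments.

Section Basics.
Variables (Point Line : Type) (inc : Point -> Line -> Prop).
Hypothesis HA : desargues_affine_plane inc.
Variable l0 : Line.

Definition ln (X Y : Point) : Line := epsilon (inhabits l0) (fun l => inc X l /\ inc Y l).
Definition pl (X : Point) (M : Line) : Line :=
  epsilon (inhabits l0) (fun m => inc X m /\ par inc m M).

Lemma L2 : forall P Q, P <> Q ->
  exists l, inc P l /\ inc Q l /\ (forall m, inc P m -> inc Q m -> m = l).
Proof. destruct HA as [H _]; exact H. Qed.

Lemma PF : forall P l, ~ inc P l ->
     exists m, inc P m /\ par inc m l /\ (forall m', inc P m' -> par inc m' l -> m' = m).
Proof. destruct HA as [_ [H _]]; exact H. Qed.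

Lemma DES : desargues_axiom inc.
Proof. destruct HA as [_ [_ [_ H]]]; exact H. Qed.

Lemma uniq : forall X Y l m, X <> Y -> inc X l -> inc Y l -> inc X m -> inc Y m -> l = m.
Proof.
  intros X Y l m H a b c d. destruct (L2 H) as [n [_ [_ Hn]]].
  rewrite (Hn l a b), (Hn m c d); reflexivity.
Qed.

Lemma ln_spec : forall X Y, X <> Y -> inc X (ln X Y) /\ inc Y (ln X Y).
Proof.
  intros X Y H. unfold ln. apply epsilon_spec.
  destruct (L2 H) as [n [a [b _]]]. eauto.
Qed.

Lemma ln1 : forall X Y, X <> Y -> inc X (ln X Y).
Proof. intros; apply ln_spec; auto. Qed.
Lemma ln2 : forall X Y, X <> Y -> inc Y (ln X Y).
Proof. intros; apply ln_spec; auto. Qed.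

Lemma ln_eq : forall X Y l, X <> Y -> inc X l -> inc Y l -> ln X Y = l.
Proof.
  intros X Y l H a b. apply (uniq H); auto using ln1, ln2.
Qed.

Lemma ln_sym : forall X Y, X <> Y -> ln X Y = ln Y X.
Proof.
  intros X Y H. apply ln_eq; auto using ln1, ln2.
Qed.

Lemma two_lines : forall P Q l m, l <> m -> inc P l -> inc P m -> inc Q l -> inc Q m -> P = Q.
Proof.
  intros P Q l m H a b c d. apply NNPP; intro E. apply H. apply (uniq E); auto.
Qed.

Lemma par_refl : forall l, par inc l l.
Proof. left; auto. Qed.

Lemma par_sym : forall l m, par inc l m -> par inc m l.
Proof.
  unfold par. intros l m [H|H]; [left; auto | right].
  intros [P [a b]]. apply H; eauto.
Qed.

Lemma par_meet : forall l m P, par inc l m -> inc P l -> inc P m -> l = m.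
Proof.
  unfold par. intros l m P [H|H] a b; auto. exfalso; apply H; eauto.
Qed.

Lemma par_trans : forall l m n, par inc l m -> par inc m n -> par inc l n.
Proof.
  intros l m n H1 H2.
  destruct (classic (exists P, inc P l /\ inc P n)) as [[P [a b]]|Hn];
    [| right; auto].
  destruct (classic (inc P m)) as [Pm|Pm].
  - rewrite (par_meet H1 a Pm). rewrite <- (par_meet H2 Pm b). apply par_refl.
  - destruct (PF Pm) as [k [_ [_ Hk]]].
    rewrite (Hk l a H1). rewrite (Hk n b (par_sym H2)). apply par_refl.
Qed.

Lemma pl_spec : forall X M, inc X (pl X M) /\ par inc (pl X M) M.
Proof.
  intros X M. unfold pl. apply epsilon_spec.
  destruct (classic (inc X M)) as [H|H].
  - exists M; split; auto using par_refl.
  - destruct (PF H) as [k [a [b _]]]; eauto.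
Qed.

Lemma pl1 : forall X M, inc X (pl X M).
Proof. intros; apply pl_spec. Qed.
Lemma pl2 : forall X M, par inc (pl X M) M.
Proof. intros; apply pl_spec. Qed.

Lemma pl_eq : forall X M m, inc X m -> par inc m M -> pl X M = m.
Proof.
  intros X M m a b. apply (par_meet (P := X)); auto using pl1.
  apply (par_trans (pl2 X M)). apply par_sym; auto.
Qed.

Lemma meet : forall l m, ~ par inc l m -> exists P, inc P l /\ inc P m.
Proof.
  intros l m H. apply NNPP; intro E. apply H. right. exact E.
Qed.


Definition cons (L : Line) (O I A B B1 P1 C : Point) : Prop :=
  ~ inc B1 L /\ inc P1 (ln O B1) /\ inc P1 (pl A (ln I B1)) /\ inc C L /\
  inc C (pl P1 (ln B B1)).

Lemma off_neq : forall L X Y, inc X L -> ~ inc Y L -> X <> Y.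
Proof. intros L X Y a b E; subst; auto. Qed.

Lemma on_both : forall L Y B1 X, inc Y L -> ~ inc B1 L -> inc X L -> inc X (ln Y B1) -> X = Y.
Proof.
  intros L Y B1 X a b c d. assert (Y <> B1) by (eapply off_neq; eauto).
  apply (@two_lines X Y L (ln Y B1)); auto using ln1.
  intro E; apply b; rewrite E; apply ln2; auto.
Qed.

Lemma meetL : forall L B B1 k X Y, inc B L -> ~ inc B1 L -> par inc k (ln B B1) ->
  inc X k -> inc Y k -> inc X L -> inc Y L -> X = Y.
Proof.
  intros L B B1 k X Y a b c d e f g. assert (B <> B1) by (eapply off_neq; eauto).
  apply (@two_lines X Y k L); auto.
  intro E; subst k. apply b. rewrite (par_meet c a (ln1 H)). apply ln2; auto.
Qed.

Lemma lnB1_neq : forall L Y Z B1, inc Y L -> inc Z L -> Y <> Z -> ~ inc B1 L ->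
  ln Y B1 <> ln Z B1.
Proof.
  intros L Y Z B1 a b c d E. apply c. symmetry. apply (on_both a d b).
  rewrite E. apply ln1. eapply off_neq; eauto.
Qed.

Lemma lnB1_npar : forall L Y Z B1, inc Y L -> inc Z L -> Y <> Z -> ~ inc B1 L ->
  ~ par inc (ln Y B1) (ln Z B1).
Proof.
  intros L Y Z B1 a b c d E. apply (lnB1_neq a b c d).
  apply (par_meet (P := B1) E); apply ln2; eapply off_neq; eauto.
Qed.

Section Core.
Variables (L : Line) (O I : Point).
Hypotheses (HOI : O <> I) (HO : inc O L) (HI : inc I L).

Lemma cA0 : forall B B1 P1 C, inc B L -> cons L O I O B B1 P1 C -> C = O.
Proof.
  intros B B1 P1 C hB [nB1 [p1 [p2 [hC hC2]]]].
  assert (O <> B1) by (eapply off_neq; eauto).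
  assert (P1 = O).
  { apply (@two_lines P1 O (pl O (ln I B1)) (ln O B1)); auto using pl1, ln1.
    intro E. apply (lnB1_npar HO HI HOI nB1). rewrite <- E. apply pl2. }
  subst P1. apply (meetL hB nB1 (pl2 O (ln B B1))); auto using pl1.
Qed.

Lemma cAI : forall B B1 P1 C, inc B L -> cons L O I I B B1 P1 C -> C = B.
Proof.
  intros B B1 P1 C hB [nB1 [p1 [p2 [hC hC2]]]].
  assert (O <> B1) by (eapply off_neq; eauto).
  assert (I <> B1) by (eapply off_neq; eauto).
  assert (B <> B1) by (eapply off_neq; eauto).
  rewrite (pl_eq (ln1 H0) (par_refl (ln I B1))) in p2.
  assert (P1 = B1).
  { apply (@two_lines P1 B1 (ln I B1) (ln O B1)); auto using ln2.
    intro E. apply (lnB1_neq HO HI HOI nB1). auto. }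
  subst P1. rewrite (pl_eq (ln2 H1) (par_refl (ln B B1))) in hC2.
  apply (on_both hB nB1 hC hC2).
Qed.

Lemma cB0 : forall A B1 P1 C, cons L O I A O B1 P1 C -> C = O.
Proof.
  intros A B1 P1 C [nB1 [p1 [p2 [hC hC2]]]].
  rewrite (pl_eq p1 (par_refl (ln O B1))) in hC2.
  apply (on_both HO nB1 hC hC2).
Qed.


Lemma F1 : forall A B B1 P1 C, inc A L -> A <> O -> cons L O I A B B1 P1 C -> P1 <> O.
Proof.
  intros A B B1 P1 C hA nA [nB1 [p1 [p2 [hC hC2]]]] E. subst P1.
  apply nA. apply (meetL HI nB1 (pl2 A (ln I B1))); auto using pl1.
Qed.

Lemma F2 : forall A B B1 P1 C, inc A L -> A <> I -> cons L O I A B B1 P1 C -> P1 <> B1.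
Proof.
  intros A B B1 P1 C hA nA [nB1 [p1 [p2 [hC hC2]]]] E. subst P1.
  assert (I <> B1) by (eapply off_neq; eauto).
  apply nA. apply (on_both HI nB1 hA).
  rewrite <- (par_meet (pl2 A (ln I B1)) p2 (ln2 H)). apply pl1.
Qed.

Lemma F3 : forall B1 P1 X, ~ inc B1 L -> inc P1 (ln O B1) -> P1 <> O -> inc X L -> X <> P1.
Proof.
  intros B1 P1 X nB1 p1 nP hX E. subst. apply nP. apply (on_both HO nB1 hX p1).
Qed.

Lemma F4 : forall B B1 P1, inc B L -> B <> O -> ~ inc B1 L -> inc P1 (ln O B1) ->
  P1 <> B1 -> inc P1 (ln B B1) -> False.
Proof.
  intros B B1 P1 hB nB nB1 p1 nP q.
  apply nP. apply (@two_lines P1 B1 (ln B B1) (ln O B1)); auto.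
  - apply (lnB1_neq hB HO nB nB1).
  - apply ln2; eapply off_neq; eauto.
  - apply ln2; eapply off_neq; eauto.
Qed.

Lemma mainc : forall A B B1 P1 C1 B2 P2 C2, inc A L -> inc B L -> A <> O -> A <> I -> B <> O ->
  cons L O I A B B1 P1 C1 -> cons L O I A B B2 P2 C2 -> ~ inc B2 (ln O B1) -> C1 = C2.
Proof.
  intros A B B1 P1 C1 B2 P2 C2 hA hB nAO nAI nBO c1 c2 nB2.
  pose proof (F1 hA nAO c1) as nP1O. pose proof (F1 hA nAO c2) as nP2O.
  pose proof (F2 hA nAI c1) as nP1B. pose proof (F2 hA nAI c2) as nP2B.
  destruct c1 as [nB1 [p1 [p2 [hC1 hC1']]]].
  destruct c2 as [nB2' [q1 [q2 [hC2 hC2']]]].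
  assert (O <> B1) by (eapply off_neq; eauto).
  assert (O <> B2) by (eapply off_neq; eauto).
  assert (I <> B1) by (eapply off_neq; eauto).
  assert (I <> B2) by (eapply off_neq; eauto).
  assert (B <> B1) by (eapply off_neq; eauto).
  assert (B <> B2) by (eapply off_neq; eauto).
  assert (B1 <> B2) by (intro E; subst; apply nB2; apply ln2; auto).
  assert (lO12 : ln O B1 <> ln O B2) by (intro E; apply nB2; rewrite E; apply ln2; auto).
  assert (L <> ln O B1) by (intro E; apply nB1; rewrite E; apply ln2; auto).
  assert (L <> ln O B2) by (intro E; apply nB2'; rewrite E; apply ln2; auto).
  assert (P1 <> P2).
  { intro E; subst P2. apply nP1O. apply (two_lines lO12); auto using ln1. }
  assert (A <> P1) by (apply (F3 nB1 p1 nP1O hA)).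
  assert (A <> P2) by (apply (F3 nB2' q1 nP2O hA)).
  assert (C1 <> P1) by (apply (F3 nB1 p1 nP1O hC1)).
  assert (C1 <> P2) by (apply (F3 nB2' q1 nP2O hC1)).
  assert (ln I B1 <> pl A (ln I B1)).
  { intro E. apply nAI. apply (on_both HI nB1 hA). rewrite E. apply pl1. }
  assert (ln I B2 <> pl A (ln I B2)).
  { intro E. apply nAI. apply (on_both HI nB2' hA). rewrite E. apply pl1. }
  pose proof DES as D. unfold desargues_axiom in D.
  assert (par1 : par inc (ln B1 B2) (ln P1 P2)).
  { apply (D B1 I B2 P1 A P2 (ln O B1) L (ln O B2) (ln I B1) (pl A (ln I B1))
             (ln I B2) (pl A (ln I B2)) (ln B1 B2) (ln P1 P2));
    auto using ln1, ln2, pl1, par_sym, pl2.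
    right. exists O. auto using ln1. }
  assert (B <> C1).
  { intro E; subst C1. apply (F4 hB nBO nB1 p1 nP1B).
    rewrite <- (par_meet (pl2 P1 (ln B B1)) hC1' (ln1 H3)). apply pl1. }
  assert (par2 : par inc (ln B B2) (ln C1 P2)).
  { apply (D B B1 B2 C1 P1 P2 L (ln O B1) (ln O B2) (ln B B1) (pl P1 (ln B B1))
             (ln B1 B2) (ln P1 P2) (ln B B2) (ln C1 P2));
    auto using ln1, ln2, pl1, par_sym, pl2.
    - right. exists O. auto using ln1.
    - intro E. apply (F4 hB nBO nB1 p1 nP1B). rewrite E. apply pl1.
    - intro E. apply nP1B. apply (@two_lines P1 B1 (ln B1 B2) (ln O B1)); auto using ln1, ln2.
      + intro E'. apply nB2. rewrite <- E'. apply ln2; auto.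
      + rewrite E. apply ln1; auto. }
  rewrite (pl_eq (ln2 (X:=C1) (Y:=P2) ltac:(assumption)) (par_sym par2)) in hC2'.
  apply (meetL hB nB2' (par_sym par2)); auto using ln1.
Qed.


Lemma Dpt : forall B1, ~ inc B1 L -> exists D, ~ inc D L /\ ~ inc D (ln O B1).
Proof.
  intros B1 nB1. assert (O <> B1) by (eapply off_neq; eauto).
  assert (L <> ln O B1) by (intro E; apply nB1; rewrite E; apply ln2; auto).
  destruct (@meet (pl B1 L) (pl I (ln O B1))) as [D [d1 d2]].
  { intro E. apply H0. apply (par_meet (P := O)); auto using ln1.
    apply (par_trans (par_sym (pl2 B1 L))). apply (par_trans E). apply pl2. }
  exists D; split; intro E.
  - apply nB1. rewrite <- (par_meet (pl2 B1 L) d1 E). apply pl1.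
  - apply HOI. symmetry. apply (on_both HO nB1 HI).
    rewrite <- (par_meet (pl2 I (ln O B1)) d2 E). apply pl1.
Qed.

Lemma cons_ex : forall A B B1, inc A L -> inc B L -> ~ inc B1 L ->
  exists P1 C, cons L O I A B B1 P1 C.
Proof.
  intros A B B1 hA hB nB1.
  assert (B <> B1) by (eapply off_neq; eauto).
  destruct (@meet (pl A (ln I B1)) (ln O B1)) as [P1 [a1 a2]].
  { intro E. apply (lnB1_npar HI HO (not_eq_sym HOI) nB1).
    apply (par_trans (par_sym (pl2 A (ln I B1)))). exact E. }
  destruct (@meet (pl P1 (ln B B1)) L) as [C [c1 c2]].
  { intro E. apply nB1. rewrite <- (par_meet (P := B) (par_trans (par_sym (pl2 P1 (ln B B1))) E));
      auto using ln1, ln2. }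
  exists P1, C. unfold cons; auto.
Qed.

Lemma cons_uniq : forall A B B1 P1 C1 B2 P2 C2, inc A L -> inc B L ->
  cons L O I A B B1 P1 C1 -> cons L O I A B B2 P2 C2 -> C1 = C2.
Proof.
  intros A B B1 P1 C1 B2 P2 C2 hA hB c1 c2.
  destruct (classic (A = O)) as [E|nAO].
  { subst A. rewrite (cA0 hB c1), (cA0 hB c2). reflexivity. }
  destruct (classic (A = I)) as [E|nAI].
  { subst A. rewrite (cAI hB c1), (cAI hB c2). reflexivity. }
  destruct (classic (B = O)) as [E|nBO].
  { subst B. rewrite (cB0 c1), (cB0 c2). reflexivity. }
  destruct (classic (inc B2 (ln O B1))) as [i|ni].
  - assert (nB1 : ~ inc B1 L) by apply c1.
    assert (nB2 : ~ inc B2 L) by apply c2.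
    destruct (Dpt nB1) as [D [nD1 nD2]].
    destruct (cons_ex hA hB nD1) as [P3 [C3 c3]].
    rewrite (mainc hA hB nAO nAI nBO c1 c3 nD2).
    symmetry. apply (mainc hA hB nAO nAI nBO c2 c3).
    assert (O <> B1) by (eapply off_neq; eauto).
    assert (O <> B2) by (eapply off_neq; eauto).
    rewrite (ln_eq H0 (ln1 H) i). exact nD2.
  - apply (mainc hA hB nAO nAI nBO c1 c2 ni).
Qed.


Lemma on_line_iff : forall X, on_line inc O I X <-> inc X L.
Proof.
  intros X; split.
  - intros [l [a [b c]]]. rewrite <- (uniq HOI a b HO HI). exact c.
  - intro h. exists L; auto.
Qed.

Lemma mul_rel_cons : forall A B C, inc B L -> mul_rel inc O I A B C ->
  exists B1 P1, cons L O I A B B1 P1 C.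
Proof.
  intros A B C hB [hC [B1 [P1 [nB1 [[m [m1 [[n [n1 [n2 n3]]] m3]]]
     [[n' [o1 [o2 o3]]] [k [k1 [[n'' [r1 [r2 r3]]] k3]]]]]]]]].
  apply on_line_iff in hC. assert (nB1' : ~ inc B1 L) by (rewrite <- on_line_iff; auto). clear nB1; rename nB1' into nB1.
  assert (O <> B1) by (apply (@off_neq L); auto).
  assert (I <> B1) by (apply (@off_neq L); auto).
  assert (B <> B1) by (apply (@off_neq L); auto).
  exists B1, P1. unfold cons. repeat split; auto.
  - rewrite (ln_eq H o1 o2). auto.
  - rewrite (ln_eq H0 n1 n2). rewrite (pl_eq m1 n3). auto.
  - rewrite (ln_eq H1 r1 r2). rewrite (pl_eq k1 r3). auto.
Qed.

Lemma cons_mul_rel : forall A B B1 P1 C, inc B L -> cons L O I A B B1 P1 C ->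
  mul_rel inc O I A B C.
Proof.
  intros A B B1 P1 C hB [nB1 [p1 [p2 [hC hC2]]]].
  assert (O <> B1) by (eapply off_neq; eauto).
  assert (I <> B1) by (eapply off_neq; eauto).
  assert (B <> B1) by (eapply off_neq; eauto).
  split. { apply on_line_iff; auto. }
  exists B1, P1. split. { rewrite on_line_iff; auto. }
  split. { exists (pl A (ln I B1)). split; [apply pl1|]. split; auto.
           exists (ln I B1). auto using ln1, ln2, pl2. }
  split. { exists (ln O B1). auto using ln1, ln2. }
  exists (pl P1 (ln B B1)). split; [apply pl1|]. split; auto.
  exists (ln B B1). auto using ln1, ln2, pl2.
Qed.

Lemma exists_off : exists B1, ~ inc B1 L.
Proof.
  destruct HA as [_ [_ [[X [Y [Z nc]]] _]]].
  apply NNPP; intro E. apply nc. exists L.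
  repeat split; apply NNPP; intro F; apply E; eauto.
Qed.

Lemma mul_spec : forall A B, inc A L -> inc B L ->
  mul_rel inc O I A B (mul inc O I A B).
Proof.
  intros A B hA hB. unfold mul. apply epsilon_spec.
  destruct exists_off as [B1 nB1].
  destruct (cons_ex hA hB nB1) as [P1 [C c]].
  exists C. apply (cons_mul_rel hB c).
Qed.

Lemma mul_eq : forall A B C, inc A L -> inc B L -> mul_rel inc O I A B C ->
  mul inc O I A B = C.
Proof.
  intros A B C hA hB h.
  destruct (mul_rel_cons hB (mul_spec hA hB)) as [B1 [P1 c1]].
  destruct (mul_rel_cons hB h) as [B2 [P2 c2]].
  apply (cons_uniq hA hB c1 c2).
Qed.

Lemma mul_L : forall A B, inc A L -> inc B L -> inc (mul inc O I A B) L.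
Proof.
  intros A B hA hB. apply on_line_iff. apply (mul_spec hA hB).
Qed.

Lemma inv_ex : forall X, inc X L -> X <> O ->
  exists Y, inc Y L /\ mul inc O I Y X = I.
Proof.
  intros X hX nX. destruct exists_off as [B1 nB1].
  assert (O <> B1) by (eapply off_neq; eauto).
  assert (I <> B1) by (eapply off_neq; eauto).
  assert (X <> B1) by (eapply off_neq; eauto).
  destruct (@meet (pl I (ln X B1)) (ln O B1)) as [P1 [a1 a2]].
  { intro E. apply (lnB1_npar hX HO nX nB1).
    apply (par_trans (par_sym (pl2 I (ln X B1)))). exact E. }
  destruct (@meet (pl P1 (ln I B1)) L) as [Y [c1 c2]].
  { intro E. apply nB1. rewrite <- (par_meet (P := I) (par_trans (par_sym (pl2 P1 (ln I B1))) E));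
      auto using ln1, ln2. }
  exists Y. split; auto. apply (mul_eq c2 hX). apply (cons_mul_rel (B1 := B1) (P1 := P1) hX).
  unfold cons. repeat split; auto.
  - rewrite (pl_eq c1 (pl2 P1 (ln I B1))). apply pl1.
  - rewrite (pl_eq a1 (pl2 I (ln X B1))). apply pl1.
Qed.

Lemma inv_uniq : forall X Y1 Y2, inc X L -> X <> O -> inc Y1 L -> inc Y2 L ->
  mul inc O I Y1 X = I -> mul inc O I Y2 X = I -> Y1 = Y2.
Proof.
  intros X Y1 Y2 hX nX h1 h2 e1 e2.
  pose proof (mul_spec h1 hX) as m1. rewrite e1 in m1.
  pose proof (mul_spec h2 hX) as m2. rewrite e2 in m2.
  destruct (mul_rel_cons hX m1) as [B1 [P1 c1]].
  destruct (mul_rel_cons hX m2) as [B2 [P2' c2']].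
  assert (nB1 : ~ inc B1 L) by apply c1.
  destruct (cons_ex h2 hX nB1) as [P2 [C2 c2]].
  assert (C2 = I) by (apply (cons_uniq h2 hX c2 c2')). subst C2.
  destruct c1 as [_ [p1 [p2 [_ p3]]]]. destruct c2 as [_ [q1 [q2 [_ q3]]]].
  assert (O <> B1) by (eapply off_neq; eauto).
  assert (X <> B1) by (eapply off_neq; eauto).
  pose proof (pl_eq p3 (pl2 P1 (ln X B1))) as hp.
  pose proof (pl_eq q3 (pl2 P2 (ln X B1))) as hq.
  assert (P1 = P2).
  { apply (@two_lines P1 P2 (pl I (ln X B1)) (ln O B1)); auto.
    - intro E. apply (lnB1_npar hX HO nX nB1). rewrite <- E. apply par_sym, pl2.
    - rewrite hp. apply pl1.
    - rewrite hq. apply pl1. }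
  subst P2.
  apply (meetL HI nB1 (pl2 P1 (ln I B1))); auto.
  - rewrite (pl_eq p2 (pl2 Y1 (ln I B1))). apply pl1.
  - rewrite (pl_eq q2 (pl2 Y2 (ln I B1))). apply pl1.
Qed.

Lemma inv_spec : forall X, inc X L -> X <> O ->
  inc (inv inc O I X) L /\ mul inc O I (inv inc O I X) X = I.
Proof.
  intros X hX nX. unfold inv.
  destruct (epsilon_spec (inhabits O) (fun Y => on_line inc O I Y /\ mul inc O I Y X = I))
    as [a b].
  { destruct (inv_ex hX nX) as [Y [c d]]. exists Y. rewrite on_line_iff. auto. }
  rewrite on_line_iff in a. auto.
Qed.

Lemma inv_eq : forall X Y, inc X L -> X <> O -> inc Y L -> mul inc O I Y X = I ->
  inv inc O I X = Y.
Proof.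
  intros X Y hX nX hY e. destruct (inv_spec hX nX) as [a b].
  apply (inv_uniq hX nX a hY b e).
Qed.

End Core.

Section Dil.
Variable delta : Point -> Point.
Hypothesis Hd : dilatation inc delta.

Lemma dinj : forall P Q, delta P = delta Q -> P = Q.
Proof. destruct Hd as [[H _] _]; exact H. Qed.

Lemma dneq : forall P Q, P <> Q -> delta P <> delta Q.
Proof. intros P Q H E; apply H; apply dinj; auto. Qed.

Lemma dline : forall l, exists m, forall P, inc P m <-> exists Q, inc Q l /\ delta Q = P.
Proof. destruct Hd as [[_ [_ H]] _]; exact H. Qed.

Lemma dpar : forall X Y, X <> Y -> par inc (ln X Y) (ln (delta X) (delta Y)).
Proof.
  intros X Y H. destruct Hd as [_ H2]. apply (H2 X Y H); auto using ln1, ln2, dneq.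
Qed.

Lemma d_on_ln : forall X Y Z, X <> Y -> inc Z (ln X Y) -> inc (delta Z) (ln (delta X) (delta Y)).
Proof.
  intros X Y Z H h. destruct (dline (ln X Y)) as [M HM].
  rewrite (ln_eq (dneq H) (proj2 (HM _) (ex_intro _ X (conj (ln1 H) eq_refl)))
                          (proj2 (HM _) (ex_intro _ Y (conj (ln2 H) eq_refl)))).
  apply HM. eauto.
Qed.

Lemma d_on_pl : forall U V Y Z, U <> V -> inc Z (pl Y (ln U V)) ->
  inc (delta Z) (pl (delta Y) (ln (delta U) (delta V))).
Proof.
  intros U V Y Z H h. destruct (classic (Y = Z)) as [E|E].
  { subst; apply pl1. }
  pose proof (ln_eq E (pl1 Y (ln U V)) h) as e.
  assert (p : par inc (ln (delta Y) (delta Z)) (ln (delta U) (delta V))).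
  { apply (par_trans (par_sym (dpar E))).
    rewrite e.
    apply (par_trans (pl2 Y (ln U V))). apply dpar; auto. }
  rewrite (pl_eq (ln1 (dneq E)) p). apply ln2, dneq; auto.
Qed.

Section DL.
Variables (L : Line) (O I : Point).
Hypotheses (HOI : O <> I) (HO : inc O L) (HI : inc I L).

Definition L' := ln (delta O) (delta I).

Lemma img_L : forall X, inc X L <-> inc (delta X) L'.
Proof.
  intros X. destruct (dline L) as [M HM].
  assert (hOI : delta O <> delta I) by (apply dneq; auto).
  assert (EM : L' = M).
  { apply ln_eq; auto; apply HM; eauto. }
  rewrite EM. split.
  - intro h; apply HM; eauto.
  - intro h. apply HM in h. destruct h as [Q [a b]]. apply dinj in b. subst; auto.
Qed.

Lemma d_cons : forall A B B1 P1 C, inc B L -> cons L O I A B B1 P1 C ->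
  cons L' (delta O) (delta I) (delta A) (delta B) (delta B1) (delta P1) (delta C).
Proof.
  intros A B B1 P1 C hB [nB1 [p1 [p2 [hC hC2]]]].
  assert (O <> B1) by (eapply off_neq; eauto).
  assert (I <> B1) by (eapply off_neq; eauto).
  assert (B <> B1) by (eapply off_neq; eauto).
  unfold cons. repeat split.
  - rewrite <- img_L; auto.
  - apply d_on_ln; auto.
  - apply d_on_pl; auto.
  - apply img_L; auto.
  - apply d_on_pl; auto.
Qed.

Lemma hOI' : delta O <> delta I.
Proof. apply dneq; auto. Qed.
Lemma hO' : inc (delta O) L'.
Proof. apply ln1, hOI'. Qed.
Lemma hI' : inc (delta I) L'.
Proof. apply ln2, hOI'. Qed.

Lemma d_mul : forall A B, inc A L -> inc B L ->
  delta (mul inc O I A B) = mul inc (delta O) (delta I) (delta A) (delta B).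
Proof.
  intros A B hA hB.
  destruct (mul_rel_cons HOI HO HI hB (mul_spec HOI HO HI hA hB)) as [B1 [P1 c]].
  pose proof (d_cons hB c) as c'.
  symmetry. apply (mul_eq hOI' hO' hI'); try (apply img_L; auto).
  apply (cons_mul_rel hOI' hO' hI' (proj1 (img_L B) hB) c').
Qed.

Lemma d_inv : forall B, inc B L -> B <> O ->
  delta (inv inc O I B) = inv inc (delta O) (delta I) (delta B).
Proof.
  intros B hB nB. destruct (inv_spec HOI HO HI hB nB) as [a b].
  symmetry. apply (inv_eq hOI' hO' hI').
  - apply img_L; auto.
  - apply dneq; auto.
  - apply img_L; auto.
  - rewrite <- d_mul; auto. rewrite b. reflexivity.
Qed.

Lemma d_ratio : forall A B, inc A L -> inc B L -> B <> O ->
  delta (ratio inc O I A B) = ratio inc (delta O) (delta I) (delta A) (delta B).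
Proof.
  intros A B hA hB nB. unfold ratio.
  destruct (inv_spec HOI HO HI hB nB) as [a b].
  rewrite d_mul; auto. rewrite d_inv; auto.
Qed.

End DL.
End Dil.
End Basics.

Theorem mainTheorem10 (Point Line : Type) (inc : Point -> Line -> Prop)
  (HA : desargues_affine_plane inc)
  (O I : Point) (HOI : O <> I)
  (delta : Point -> Point) (Hd : dilatation inc delta)
  (Hfix : exists P, delta P = P)
  (A B : Point) (HAl : on_line inc O I A) (HBl : on_line inc O I B) (HBO : B <> O) :
  delta (ratio inc O I A B) = ratio inc (delta O) (delta I) (delta A) (delta B).
Proof.
  destruct (L2 HA HOI) as [L [hO [hI _]]].
  eapply d_ratio; eauto.
  - apply (on_line_iff HA L HOI hO hI); auto.
  - apply (on_line_iff HA L HOI hO hI); auto.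
Qed.
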